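(* Let $M$ be a matroid on $S$ and $N$ a matroid on $T$ with $S\cap T=\emptyset$, let $P=M\mathbin{\Box} N$, and let $U\subseteq V\subseteq S\cup T$. Then $$P(U,V) = (\mathrm{T}^j M)(U\cap S,\,V\cap S)\ \mathbin{\Box}\ (\mathrm{L}^i N)(U\cap T,\,V\cap T),$$ where $j=\nu_N(U\cap T)$ and $i=\lambda_M(V\cap S)$.
   Context: For a matroid $M$ on $S$ write $\rho_M$ for rank, $\rho(M)=\rho_M(S)$, $\nu_M(A)=|A|-\rho_M(A)$, $\lambda_M(A)=\rho(M)-\rho_M(A)$. For matroids $M$ on $S$ and $N$ on $T$ with $S\cap T=\emptyset$, the free product $M\mathbin{\Box} N$ is the matroid on $S\cup T$ whose independent sets are those $A$ with $A\cap S$ independent in $M$ and $\lambda_M(A\cap S)\geq\nu_N(A\cap T)$. For a matroid $M$ on $S$ and $A\subseteq B\subseteq S$, $M(A,B)$ denotes the minor $(M|B)/A=(M/A)|(B\setminus A)$. The truncation $\mathrm{T}M$ has as independent sets the independent sets $A$ of $M$ with $|A|\leq\max\{0,\rho(M)-1\}$; the Higgs lift $\mathrm{L}M$ has as independent sets the $A\subseteq S$ with $\nu_M(A)\leq 1$; $\mathrm{T}^j$, $\mathrm{L}^i$ are the iterates. *)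

(* Defs.v *)
From mathcomp Require Import all_boot.
Set Implicit Arguments. Unset Strict Implicit. Unset Printing Implicit Defensive.

(* A (candidate) matroid on a finite ground set [ground] inside an ambient
   finite type E, given by its family of independent sets. *)
Record matroid (E : finType) := Matroid {
  ground : {set E};
  indep : {set E} -> bool
}.

Section Matroids.
Variable E : finType.
Implicit Types (M N : matroid E) (A B I J : {set E}).

Definition is_matroid M : Prop :=
  [/\ indep M set0,
      (forall I, indep M I -> I \subset ground M),
      (forall I J, J \subset I -> indep M I -> indep M J) &
      (forall I J, indep M I -> indep M J -> #|I| < #|J| ->
         exists2 x, x \in J :\: I & indep M (x |: I))].

Definition rank M A : nat := \max_(B : {set E} | (B \subset A) && indep M B) #|B|.
Definition rk M : nat := rank M (ground M).
Definition nullity M A : nat := #|A| - rank M A.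
Definition lambda M A : nat := rk M - rank M A.

(* Free product M [] N (ground sets assumed disjoint). *)
Definition free_product M N : matroid E :=
  Matroid (ground M :|: ground N)
    (fun A => [&& A \subset ground M :|: ground N,
                  indep M (A :&: ground M) &
                  nullity N (A :&: ground N) <= lambda M (A :&: ground M)]).

(* M(A,B) = (M|B)/A : ground B \ A; I independent iff
   I ⊆ B \ A and rho_M(I ∪ A) = |I| + rho_M(A). *)
Definition minor M A B : matroid E :=
  Matroid (B :\: A)
    (fun I => (I \subset B :\: A) && (rank M (I :|: A) == #|I| + rank M A)).

Definition trunc M : matroid E :=
  Matroid (ground M) (fun A => indep M A && (#|A| <= maxn 0 (rk M - 1))).

Definition hlift M : matroid E :=
  Matroid (ground M) (fun A => (A \subset ground M) && (nullity M A <= 1)).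

Definition meq M N : Prop :=
  ground M = ground N /\ forall A, indep M A = indep N A.

End Matroids.

(* Main.v *)
Require Import Defs.
From mathcomp Require Import all_boot.
From mathcomp Require Import zify.
Set Implicit Arguments. Unset Strict Implicit. Unset Printing Implicit Defensive.


Ltac slia := repeat match goal with
 | H : is_true (_ <= _) |- _ => revert H
 | H : @eq ?T _ _ |- _ => unify T nat; revert H
 end; repeat match goal with H : _ |- _ => clear H end; lia.

Section Helpers.
Variable E : finType.
Implicit Types (K M N : matroid E) (A B C I J X Y Z W : {set E}).

Definition hered K := forall I J, J \subset I -> indep K I -> indep K J.

Lemma rank_max K A B : B \subset A -> indep K B -> #|B| <= rank K A.
Proof. move=> sBA iB; rewrite /rank; exact: (@leq_bigmax_cond _ (fun B0 : {set E} => (B0 \subset A) && indep K B0) (fun B0 => #|B0|) B (introT andP (conj sBA iB))). Qed.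

Lemma rank_wit K A : indep K set0 ->
  exists B, [/\ B \subset A, indep K B & #|B| = rank K A].
Proof.
move=> i0; rewrite /rank.
have [|B] := @eq_bigmax_cond _ (fun B => (B \subset A) && indep K B) (fun B => #|B|).
  by apply/card_gt0P; exists set0; rewrite unfold_in /= sub0set i0.
by rewrite unfold_in => /andP [sBA iB] ->; exists B.
Qed.

Lemma rank_le K A : rank K A <= #|A|.
Proof. apply/bigmax_leqP => B /andP [sBA _]; exact: subset_leq_card. Qed.

Lemma rank_mono K A A' : A \subset A' -> rank K A <= rank K A'.
Proof.
move=> sAA'; apply/bigmax_leqP => B /andP [sBA iB]; apply: rank_max => //.
exact: subset_trans sAA'.
Qed.

Lemma cardsU_disj A B : [disjoint A & B] -> #|A :|: B| = #|A| + #|B|.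
Proof. by move=> d; rewrite cardsU -setI_eq0 in d *; rewrite (eqP d) cards0 subn0. Qed.

Lemma rank_sub K A W : hered K -> rank K (A :|: W) <= rank K A + #|W|.
Proof.
move=> hK; apply/bigmax_leqP => C /andP [sC iC].
have h1 : #|C :\: W| <= rank K A.
  apply: rank_max; last by apply: hK iC; exact: subsetDl.
  apply/subsetP => x; rewrite inE => /andP [xW xC].
  by move: (subsetP sC x xC); rewrite inE (negbTE xW) orbF.
have h2 : #|C :&: W| <= #|W| by apply: subset_leq_card; exact: subsetIr.
have := cardsID W C; slia.
Qed.

Lemma rank_indep K A : indep K A -> rank K A = #|A|.
Proof. move=> iA; apply/eqP; rewrite eqn_leq rank_le; exact: rank_max. Qed.

Lemma pick_sub k A : k <= #|A| -> exists B, B \subset A /\ #|B| = k.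
Proof.
elim: k A => [|k IH] A hk; first by exists set0; rewrite sub0set cards0.
have : A != set0 by rewrite -card_gt0; slia.
case/set0Pn => x xA.
have := cardsD1 x A; rewrite xA => hc.
have [B [sB cB]] : exists B, B \subset A :\ x /\ #|B| = k by apply: IH; slia.
exists (x |: B); split.
  apply/subsetP => y; rewrite !inE => /orP [/eqP -> //| yB].
  by move: (subsetP sB y yB); rewrite inE => /andP [].
rewrite cardsU1 cB.
have -> : x \notin B by apply/negP => /(subsetP sB); rewrite !inE eqxx.
by [].
Qed.


Lemma matroid_hered M : is_matroid M -> hered M.
Proof. by case. Qed.

Lemma basis_ext M A Z : is_matroid M -> A \subset Z ->
  exists B, [/\ indep M B, B \subset Z, #|B| = rank M Z & #|B :&: A| = rank M A].
Proof.
move=> mM sAZ; have [i0 gr hr aug] := mM.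
have [B0 [sB0 iB0 cB0]] := rank_wit A i0.
have [C [sC iC cC]] := rank_wit Z i0.
suff: forall n B, rank M Z - #|B| = n -> indep M B -> B0 \subset B -> B \subset Z ->
  exists B, [/\ indep M B, B \subset Z, #|B| = rank M Z & #|B :&: A| = rank M A].
  by move=> /(_ _ B0 erefl iB0 (subxx _) (subset_trans sB0 sAZ)).
elim=> [|n IH] B hn iB sB0B sBZ.
  exists B; split=> //.
    have := rank_max sBZ iB; slia.
  have h1 : #|B :&: A| <= rank M A.
    by apply: rank_max; [exact: subsetIr | apply: hr iB; exact: subsetIl].
  have h2 : #|B0| <= #|B :&: A| by apply: subset_leq_card; rewrite subsetI sB0B sB0.
  slia.
have [x xCB ix] : exists2 x, x \in C :\: B & indep M (x |: B) by apply: aug => //; slia.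
move: xCB; rewrite inE => /andP [xnB xC].
apply: (IH (x |: B)) => //.
- rewrite cardsU1 xnB; slia.
- by apply: subset_trans sB0B _; exact: subsetUr.
- by rewrite subUset sBZ andbT sub1set (subsetP sC).
Qed.


Lemma rank_truncf K K' t : hered K -> indep K set0 ->
  (forall A, indep K' A = indep K A && (#|A| <= t)) ->
  forall X, rank K' X = minn (rank K X) t.
Proof.
move=> hK i0 eK X; apply/eqP; rewrite eqn_leq; apply/andP; split.
  apply/bigmax_leqP => C /andP [sC]; rewrite eK => /andP [iC cC].
  rewrite leq_min cC andbT; exact: rank_max.
have [B [sB iB cB]] := rank_wit X i0.
have [D [sD cD]] : exists D : {set E}, D \subset B /\ #|D| = minn (rank K X) t.
  apply: (@pick_sub (minn (rank K X) t) B); rewrite cB; exact: geq_minl.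
rewrite -cD; apply: rank_max; first exact: subset_trans sB.
rewrite eK (hK _ _ sD iB) /= cD; exact: geq_minr.
Qed.

Lemma trunc_iter M j : is_matroid M ->
  ground (iter j (@trunc E) M) = ground M /\
  forall A, indep (iter j (@trunc E) M) A = indep M A && (#|A| <= rk M - j).
Proof.
move=> mM; have [i0 gr hr aug] := mM.
elim: j => [|j [IHg IHi]].
  split=> // A /=; case iA: (indep M A) => //=; rewrite subn0.
  by rewrite /rk (rank_max (gr _ iA) iA).
split; first by rewrite iterS.
move=> A; rewrite iterS /=.
have er : rk (iter j (@trunc E) M) = rk M - j.
  rewrite /rk IHg (rank_truncf hr i0 IHi) /rk; slia.
rewrite er IHi; case: (indep M A) => //=.
apply/idP/idP => [/andP [h1 h2]|h]; [|apply/andP; split]; slia.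
Qed.

Lemma pad N W k : is_matroid N ->
  exists C, [/\ C \subset W, #|C| = minn #|W| (rank N W + k) & nullity N C <= k].
Proof.
move=> mN; have [i0 gr hr aug] := mN.
have [B [sB iB cB]] := rank_wit W i0.
have cWB : #|W :\: B| = #|W| - #|B| by rewrite cardsD (setIidPr sB).
have [Y [sY cY]] : exists Y : {set E}, Y \subset W :\: B /\ #|Y| = minn (#|W| - rank N W) k.
  apply: (@pick_sub (minn (#|W| - rank N W) k) (W :\: B)); rewrite cWB cB; exact: geq_minl.
have dBY : [disjoint B & Y].
  rewrite disjoint_sym; apply: disjointWl sY _.
  rewrite -setI_eq0; apply/eqP/setP => x; rewrite !inE; by case: (x \in B); rewrite ?andbF.
exists (B :|: Y); split.
- by rewrite subUset sB (subset_trans sY (subsetDl _ _)).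
- rewrite cardsU_disj // cY cB; have := rank_le N W; slia.
- rewrite /nullity cardsU_disj //.
  have := rank_max (subsetUl B Y) iB.
  have : #|Y| <= k by rewrite cY; exact: geq_minr.
  slia.
Qed.

Lemma rank_restr N X : is_matroid N -> rank N (X :&: ground N) = rank N X.
Proof.
move=> mN; have [i0 gr hr aug] := mN.
apply/eqP; rewrite eqn_leq rank_mono ?subsetIl //=.
have [B [sB iB cB]] := rank_wit X i0.
by rewrite -cB rank_max // subsetI sB (gr _ iB).
Qed.

Lemma rank_hliftf N K' i : is_matroid N ->
  (forall A, indep K' A = (A \subset ground N) && (nullity N A <= i)) ->
  forall X, rank K' X = minn #|X :&: ground N| (rank N X + i).
Proof.
move=> mN eK X; apply/eqP; rewrite eqn_leq; apply/andP; split.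
  apply/bigmax_leqP => C /andP [sC]; rewrite eK /nullity => /andP [gC nC].
  rewrite leq_min; apply/andP; split.
    by apply: subset_leq_card; rewrite subsetI sC gC.
  have := rank_mono N sC; have := rank_le N C; slia.
have [C [sC cC nC]] := pad (X :&: ground N) i mN.
rewrite (rank_restr X mN) in cC.
rewrite -cC; apply: rank_max; first exact: subset_trans sC (subsetIl _ _).
by rewrite eK nC andbT (subset_trans sC (subsetIr _ _)).
Qed.

Lemma hlift_iter N i : is_matroid N ->
  ground (iter i (@hlift E) N) = ground N /\
  forall A, indep (iter i (@hlift E) N) A = (A \subset ground N) && (nullity N A <= i).
Proof.
move=> mN; have [i0 gr hr aug] := mN.
elim: i => [|i [IHg IHi]].
  split=> // A /=; rewrite leqn0 /nullity subn_eq0.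
  apply/idP/idP => [iA|/andP [sA cA]].
    by rewrite gr //= rank_indep.
  have [B [sB iB cB]] := rank_wit A i0.
  suff /eqP <- : B == A by [].
  by rewrite eqEcard sB cB.
split; first by rewrite iterS.
move=> A; rewrite iterS /= IHg.
case sA: (A \subset ground N) => //=.
rewrite /nullity (rank_hliftf mN IHi) (setIidPl sA).
apply/idP/idP => h; slia.
Qed.


Lemma disjD I A C : I \subset C :\: A -> [disjoint I & A].
Proof.
move=> sI; rewrite -setI_eq0; apply/eqP/setP => x; rewrite !inE.
case xI: (x \in I) => //=; have := subsetP sI x xI; rewrite !inE.
by case: (x \in A).
Qed.

Lemma rank_minor K A B X : hered K -> X \subset B :\: A ->
  (exists I, [/\ I \subset X, #|I| + rank K A <= rank K (I :|: A)
                & rank K (X :|: A) - rank K A <= #|I|]) ->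
  rank (minor K A B) X = rank K (X :|: A) - rank K A.
Proof.
move=> hK sX [I [sI h1 h2]]; apply/eqP; rewrite eqn_leq; apply/andP; split.
  apply/bigmax_leqP => J /andP [sJ] /= /andP [_ /eqP e].
  have := rank_mono K (setSU A sJ); slia.
apply: leq_trans h2 _; apply: rank_max => //=.
rewrite (subset_trans sI sX) /=.
have := rank_sub A I hK; rewrite setUC; slia.
Qed.

Lemma wit_trunc M K t A X : is_matroid M ->
  (forall Y, rank K Y = minn (rank M Y) t) ->
  exists I, [/\ I \subset X, #|I| + rank K A <= rank K (I :|: A)
                & rank K (X :|: A) - rank K A <= #|I|].
Proof.
move=> mM eK; have [i0 gr hr aug] := mM.
have [B [iB sB cB cBA]] := basis_ext mM (subsetUr X A).
have cD := cardsID A B.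
have [I [sI cI]] : exists I : {set E}, I \subset B :\: A /\
    #|I| = minn (rank M (X :|: A)) t - minn (rank M A) t.
  apply: pick_sub; slia.
exists I; split.
- apply/subsetP => x /(subsetP sI); rewrite !inE => /andP [xA xB].
  by move: (subsetP sB x xB); rewrite !inE (negbTE xA) orbF.
- rewrite !eK.
  have dI : [disjoint I & B :&: A].
    by apply: disjointWr (disjD sI); exact: subsetIr.
  have := @rank_max M (I :|: A) (I :|: (B :&: A)).
  rewrite cardsU_disj // cBA => h.
  have : #|I| + rank M A <= rank M (I :|: A).
    apply: h; first by apply: setUS; exact: subsetIr.
    apply: hr iB; rewrite subUset subsetIl andbT.
    exact: subset_trans sI (subsetDl _ _).
  slia.
- rewrite !eK; slia.
Qed.

Lemma wit_hlift N K i A X : is_matroid N ->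
  (forall Y, rank K Y = minn #|Y :&: ground N| (rank N Y + i)) ->
  A \subset ground N -> X \subset ground N -> [disjoint X & A] ->
  exists I, [/\ I \subset X, #|I| + rank K A <= rank K (I :|: A)
                & rank K (X :|: A) - rank K A <= #|I|].
Proof.
move=> mN eK sA sX dXA; have [i0 gr hr aug] := mN.
have [B [iB sB cB cBA]] := basis_ext mN (subsetUr X A).
have cD := cardsID A B.
have sBAX : B :\: A \subset X.
  apply/subsetP => x; rewrite !inE => /andP [xA xB].
  by move: (subsetP sB x xB); rewrite !inE (negbTE xA) orbF.
have cXB : #|X :&: B| <= #|B :\: A|.
  apply: subset_leq_card; apply/subsetP => x; rewrite !inE => /andP [xX xB].
  by rewrite xB (disjointFr dXA xX).
have cXD := cardsID B X.
have rA := rank_le N A.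
have [Y [sY cY]] : exists Y : {set E}, Y \subset X :\: B /\
    #|Y| = minn (#|A| + #|X|) (rank N (X :|: A) + i) - minn #|A| (rank N A + i)
           - (rank N (X :|: A) - rank N A).
  apply: pick_sub; slia.
have dY : [disjoint B :\: A & Y].
  rewrite disjoint_sym; apply: disjointWr (disjD sY); exact: subsetDl.
have sI : (B :\: A) :|: Y \subset X by rewrite subUset sBAX (subset_trans sY (subsetDl _ _)).
have dIA : [disjoint (B :\: A) :|: Y & A] by apply: disjointWl sI dXA.
have cXA : #|X :|: A| = #|X| + #|A| by rewrite cardsU_disj.
have cI : #|(B :\: A) :|: Y| = #|B :\: A| + #|Y| by rewrite cardsU_disj.
exists ((B :\: A) :|: Y); split => //.
- rewrite !eK (setIidPl sA).
  have sIA : (B :\: A) :|: Y :|: A \subset ground N.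
    by rewrite subUset sA (subset_trans sI sX).
  rewrite (setIidPl sIA) (cardsU_disj dIA) !cI.
  have : #|B| <= rank N ((B :\: A) :|: Y :|: A).
    apply: rank_max iB; apply/subsetP => x xB; rewrite !inE xB andbT.
    by case: (x \in A); rewrite ?orbT.
  slia.
- rewrite !eK (setIidPl sA).
  have sXA : X :|: A \subset ground N by rewrite subUset sA sX.
  rewrite (setIidPl sXA) cXA cI; slia.
Qed.


Lemma split_card (C S T : {set E}) : [disjoint S & T] -> C \subset S :|: T ->
  #|C| = #|C :&: S| + #|C :&: T|.
Proof.
move=> dST sC; rewrite -cardsU_disj; last first.
  by apply: disjointWl (subsetIr _ _) _; apply: disjointWr (subsetIr _ _) dST.
by rewrite -setIUr (setIidPl sC).
Qed.

Lemma rank_fp M N X : is_matroid M -> is_matroid N -> [disjoint ground M & ground N] ->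
  rank (free_product M N) X =
  minn (rank M (X :&: ground M) + #|X :&: ground N|) (rk M + rank N (X :&: ground N)).
Proof.
move=> mM mN dST; have [i0 gr hr aug] := mM; have [i0' gr' hr' aug'] := mN.
have rS : rank M (X :&: ground M) <= rk M by apply: rank_mono; exact: subsetIr.
apply/eqP; rewrite eqn_leq; apply/andP; split.
  apply/bigmax_leqP => C /andP [sC] /= /and3P [sCST iCS nCT].
  rewrite (split_card dST sCST).
  have := rank_indep iCS.
  have := rank_max (setSI (ground M) sC) iCS.
  have := subset_leq_card (setSI (ground N) sC).
  have := rank_mono N (setSI (ground N) sC).
  have := rank_le N (C :&: ground N).
  move: nCT; rewrite /nullity /lambda; slia.
have [BS [sBS iBS cBS]] := rank_wit (X :&: ground M) i0.
have [CT [sCT cCT nCT]] := pad (X :&: ground N) (rk M - rank M (X :&: ground M)) mN.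
have BSS : BS \subset ground M := gr _ iBS.
have CTT : CT \subset ground N := subset_trans sCT (subsetIr _ _).
have dBC : [disjoint BS & CT] by apply: disjointWl BSS _; apply: disjointWr CTT dST.
have e1 : (BS :|: CT) :&: ground M = BS.
  apply/setP => x; rewrite !inE; case xB: (x \in BS) => /=.
    by rewrite (subsetP BSS).
  by case xC: (x \in CT) => //=; rewrite (disjointFl dST (subsetP CTT x xC)).
have e2 : (BS :|: CT) :&: ground N = CT.
  apply/setP => x; rewrite !inE; case xC: (x \in CT) => /=.
    by rewrite orbT (subsetP CTT).
  by rewrite orbF; case xB: (x \in BS) => //=; rewrite (disjointFr dST (subsetP BSS x xB)).
have : #|BS :|: CT| <= rank (free_product M N) X.
  apply: rank_max.
    rewrite subUset (subset_trans sBS (subsetIl _ _)) /=.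
    exact: subset_trans sCT (subsetIl _ _).
  rewrite /= e1 e2 iBS /= subUset.
  rewrite (subset_trans BSS (subsetUl _ _)) (subset_trans CTT (subsetUr _ _)) /=.
  by rewrite /lambda (rank_indep iBS) cBS.
rewrite cardsU_disj // cBS cCT (rank_restr X mN); slia.
Qed.


Lemma hlift_hered N i K : is_matroid N ->
  (forall A, indep K A = (A \subset ground N) && (nullity N A <= i)) -> hered K.
Proof.
move=> mN eK I J sJ; rewrite !eK => /andP [sI nI].
rewrite (subset_trans sJ sI) /=; move: nI; rewrite /nullity.
have e : I = J :|: (I :\: J).
  apply/setP => x; rewrite !inE; case xJ: (x \in J) => //=.
  by rewrite (subsetP sJ).
have := rank_sub J (I :\: J) (matroid_hered mN); rewrite -e.
have := cardsID J I; rewrite (setIidPr sJ).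
have := rank_le N J; slia.
Qed.

Lemma trunc_hered M t K : is_matroid M ->
  (forall A, indep K A = indep M A && (#|A| <= t)) -> hered K.
Proof.
move=> mM eK I J sJ; rewrite !eK => /andP [iI cI].
rewrite (matroid_hered mM sJ iI) /=; apply: leq_trans cI; exact: subset_leq_card.
Qed.

Lemma setI_DI (I U V S : {set E}) : I \subset V :\: U ->
  I :&: ((V :&: S) :\: (U :&: S)) = I :&: S.
Proof.
move=> sI; apply/setP => x; rewrite !inE; case xI: (x \in I) => //=.
have := subsetP sI x xI; rewrite !inE => /andP [xU xV].
by rewrite xV (negbTE xU) /=; case: (x \in S).
Qed.

Lemma setDUK' (A B : {set E}) : B \subset A -> (A :\: B) :|: B = A.
Proof.
move=> sBA; apply/setP => x; rewrite !inE; case xB: (x \in B) => /=.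
  by rewrite ?orbT (subsetP sBA).
by rewrite ?orbF ?andbT.
Qed.

End Helpers.

Lemma arith (a b v r p c d u q j i : nat) :
  a <= b -> b <= a + p -> b <= v -> v <= r -> c <= d -> d <= c + q -> c <= u ->
  j = u - c -> i = r - v ->
  (minn (b + (q + u)) (r + d) == p + q + minn (a + u) (r + c)) =
  (minn b (r - j) == p + minn a (r - j)) &&
  (q - (minn (q + u) (d + i) - minn u (c + i)) <=
   minn v (r - j) - minn a (r - j) - (minn b (r - j) - minn a (r - j))).
Proof.
move=> h1 h2 h3 h4 h5 h6 h7 hj hi.
have eu : u = c + j by rewrite hj subnKC.
have er : r = v + i by rewrite hi subnKC.
rewrite eu er {hj hi eu er h7 h4}.
have e1 : minn (q + (c + j)) (d + i) - minn (c + j) (c + i) <= q.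
  rewrite /minn; repeat case: ifP => ?; lia.
have e2 : minn (c + j) (c + i) <= minn (q + (c + j)) (d + i).
  rewrite /minn; repeat case: ifP => ?; lia.
have e3 : forall t, minn v t - minn a t - (minn b t - minn a t) = minn v t - minn b t.
  move=> t; rewrite /minn; repeat case: ifP => ?; lia.
rewrite e3.
have e4 : forall t, minn b t <= minn v t.
  move=> t; rewrite /minn; repeat case: ifP => ?; lia.
have e5 : forall X Y Z W, Y <= X -> W <= Z -> (q - (X - Y) <= Z - W) = (q + Y + W <= Z + X).
  move=> X Y Z W ? ?; apply/idP/idP => ?; lia.
rewrite e5 //.
have [hx|hx] := leqP j (v + i).
  have [t ht] : exists t, v + i - j = t by eexists.
  have ht' : v + i = t + j by rewrite -ht subnK.
  rewrite ht {ht hx}.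
  rewrite /minn; repeat case: ifP => ?; apply/eqP/andP => [h|[/eqP h' h'']]; try split; try apply/eqP; lia.
have -> : v + i - j = 0 by apply/eqP; rewrite subn_eq0 ltnW.
rewrite !minn0 /minn; repeat case: ifP => ?; apply/eqP/andP => [h|[/eqP h' h'']]; try split; try apply/eqP; lia.
Qed.


Unset Implicit Arguments.

Theorem theorem5p3 (E : finType) (M N : matroid E) (U V : {set E}) :
  is_matroid M -> is_matroid N -> [disjoint ground M & ground N] ->
  U \subset V -> V \subset ground M :|: ground N ->
  meq (minor (free_product M N) U V)
      (free_product
         (minor (iter (nullity N (U :&: ground N)) (@trunc E) M)
                (U :&: ground M) (V :&: ground M))
         (minor (iter (lambda M (V :&: ground M)) (@hlift E) N)
                (U :&: ground N) (V :&: ground N))).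
Proof.
move=> mM mN dST sUV sV.
have gE : (V :&: ground M) :\: (U :&: ground M) :|: (V :&: ground N) :\: (U :&: ground N)
          = V :\: U.
  apply/setP => x; move: (subsetP sV x); rewrite !inE.
  case: (x \in V); case: (x \in U); case: (x \in ground M); case: (x \in ground N) => //=;
  by move=> /(_ isT).
split; first by rewrite /= gE.
move=> I /=; rewrite gE.
case sI: (I \subset V :\: U) => //=.
rewrite (setI_DI _ sI) (setI_DI _ sI).
have [i0M grM hrM augM] := mM; have [i0N grN hrN augN] := mN.
set j := nullity N (U :&: ground N).
set i := lambda M (V :&: ground M).
set K1 := iter j (@trunc E) M.
set K2 := iter i (@hlift E) N.
have [gK1 iK1] := trunc_iter j mM.
have [gK2 iK2] := hlift_iter i mN.
have eK1 := rank_truncf hrM i0M iK1.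
have eK2 := rank_hliftf mN iK2.
have hK1 := trunc_hered mM iK1.
have hK2 := hlift_hered mN iK2.
have sIS : I :&: ground M \subset V :&: ground M :\: U :&: ground M.
  by rewrite -(setI_DI _ sI) subsetIr.
rewrite sIS /=.
have sIT : I :&: ground N \subset V :&: ground N :\: U :&: ground N.
  by rewrite -(setI_DI _ sI) subsetIr.
have sUS : U :&: ground M \subset V :&: ground M by apply: setSI.
have sUT : U :&: ground N \subset V :&: ground N by apply: setSI.
have dIU : [disjoint I & U] by apply: disjD sI.
have dITU : [disjoint I :&: ground N & U :&: ground N].
  by apply: disjointWl (subsetIl _ _) _; apply: disjointWr (subsetIl _ _) dIU.
have e1 : rank (minor K1 (U :&: ground M) (V :&: ground M)) (I :&: ground M) =
   rank K1 (I :&: ground M :|: U :&: ground M) - rank K1 (U :&: ground M).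
  by apply: rank_minor => //; apply: wit_trunc mM eK1.
have e2 : rk (minor K1 (U :&: ground M) (V :&: ground M)) =
   rank K1 (V :&: ground M) - rank K1 (U :&: ground M).
  rewrite /rk /= -{3}(setDUK' sUS).
  by apply: rank_minor => //; apply: wit_trunc mM eK1.
have e3 : rank (minor K2 (U :&: ground N) (V :&: ground N)) (I :&: ground N) =
   rank K2 (I :&: ground N :|: U :&: ground N) - rank K2 (U :&: ground N).
  apply: rank_minor => //; apply: wit_hlift mN eK2 _ _ dITU; exact: subsetIr.
rewrite /nullity /lambda e1 e2 e3 !eK1 !eK2.
have sITUT : I :&: ground N :|: U :&: ground N \subset ground N.
  by rewrite subUset !subsetIr.
have eUT : U :&: ground N :&: ground N = U :&: ground N by rewrite -setIA setIid.
rewrite (setIidPl sITUT) eUT !(rank_fp _ mM mN dST) !(setIUl I U) (cardsU_disj dITU).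
have sIST : I \subset ground M :|: ground N.
  by apply: subset_trans sI _; apply: subset_trans (subsetDl _ _) sV.
rewrite (split_card dST sIST).
have hj : j = #|U :&: ground N| - rank N (U :&: ground N) by [].
have hi : i = rk M - rank M (V :&: ground M) by [].
have f1 := rank_mono M (subsetUr (I :&: ground M) (U :&: ground M)).
have f2 := rank_sub (U :&: ground M) (I :&: ground M) (matroid_hered mM).
rewrite setUC in f2.
have f3 : rank M (I :&: ground M :|: U :&: ground M) <= rank M (V :&: ground M).
  by apply: rank_mono; rewrite subUset sUS (subset_trans sIS (subsetDl _ _)).
have f4 : rank M (V :&: ground M) <= rk M by apply: rank_mono; exact: subsetIr.
have f5 := rank_mono N (subsetUr (I :&: ground N) (U :&: ground N)).
have f6 := rank_sub (U :&: ground N) (I :&: ground N) (matroid_hered mN).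
rewrite setUC in f6.
have f7 := rank_le N (U :&: ground N).
clearbody j i.
exact: (arith f1 f2 f3 f4 f5 f6 f7 hj hi).
Qed.
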